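(* Let $N\ge2$ and $T\ge1$ be integers. For a sequence $s=(s(1),\dots,s(T))\in\{0,1\}^T$ define $$F(s)=\frac1T\sum_{t=1}^T\Big(1+\sum_{\ell=1}^{t}\prod_{j=\ell}^{t}\Big(1-\frac{s(j)}{N}\Big)\Big).$$ Call $s$ a consecutive blocking sequence (CBS) if its zeros are nonempty and occupy a set of consecutive positions. For a CBS $s$, let $L(s)$ be the number of ones before its block of zeros and $R(s)$ the number of ones after it. Then, for every $m$ with $1\le m\le T$, among all $s\in\{0,1\}^T$ with exactly $m$ zeros, $F$ is maximized by a CBS $s$ with $|L(s)-R(s)|\le1$.
   Context: $F(s)$ is the time-averaged expected age of one user (measured at the end of each slot, starting from age $1$) when a BS schedules that user with probability $1/N$ in every slot and $s(j)=0$ means the user is blocked in slot $j$. *)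

(* Defs.v *)
From mathcomp Require Import all_boot all_order all_algebra.
Set Implicit Arguments. Unset Strict Implicit. Unset Printing Implicit Defensive.
Import Order.TTheory GRing.Theory Num.Theory.
Local Open Scope ring_scope.

(* A blocking sequence s is a list of booleans of length T; the paper's
   s(j) (1-indexed) is nth false s (j-1); true = 1 (scheduled allowed),
   false = 0 (blocked). *)

Definition F (R : realFieldType) (N T : nat) (s : seq bool) : R :=
  (T%:R)^-1 * \sum_(t < T)
     (1 + \sum_(l < t.+1) \prod_(l <= j < t.+1) (1 - (nth false s j)%:R / N%:R)).

Definition nzeros (s : seq bool) : nat := count (fun b => ~~ b) s.

Definition CBS_LR (s : seq bool) (L R : nat) : Prop :=
  exists k : nat, (0 < k)%N /\ s = nseq L true ++ nseq k false ++ nseq R true.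

Definition is_CBS (s : seq bool) : Prop := exists L R, CBS_LR s L R.

(* Main.v *)
Require Import Defs.
From mathcomp Require Import all_boot all_order all_algebra.
From mathcomp Require Import zify ring lra.
Import Order.TTheory GRing.Theory Num.Theory.
Local Open Scope ring_scope.

Definition Oc (s : seq bool) (b : nat) : nat := (\sum_(0 <= j < b) nth false s j)%N.
Definition dist (u v : nat) : nat := ((u - v) + (v - u))%N.

Fixpoint W (s : seq bool) : seq nat :=
  match s with [::] => [::] | b :: s' => if b then map S (W s') else 0%N :: W s' end.

Lemma Oc_cons x s b : Oc (x :: s) b.+1 = (x + Oc s b)%N.
Proof. by rewrite /Oc big_nat_recl. Qed.
Lemma Oc0 s : Oc s 0 = 0%N.
Proof. by rewrite /Oc big_geq. Qed.
Lemma Oc_split s l k : (l <= k)%N -> Oc s k = (Oc s l + \sum_(l <= j < k) nth false s j)%N.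
Proof. by move=> h; rewrite /Oc (big_cat_nat (leq0n l) h). Qed.

Definition V s := map (Oc s) (iota 0 (size s).+1).

Lemma V_cons x s : V (x :: s) = 0%N :: map (addn x) (V s).
Proof.
rewrite /V [size (x :: s)]/= -[iota 0 (size s).+2]/(0%N :: iota 1 (size s).+1).
rewrite map_cons Oc0; congr (_ :: _).
rewrite (iotaDl 1 0) -!map_comp; apply: eq_map => b /=.
by rewrite add1n Oc_cons.
Qed.

Lemma V_perm s : perm_eq (V s) (iota 0 (count id s).+1 ++ W s).
Proof.
elim: s => [|x s IH]; first by rewrite /V /= Oc0.
rewrite V_cons; case: x => /=.
- have := perm_map (addn 1) IH; rewrite map_cat => h.
  rewrite add1n /= perm_cons.
  apply: (perm_trans h).
  rewrite -iotaDl.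
  have -> : [seq (1 + i)%N | i <- W s] = map S (W s) by apply: eq_map.
  by [].
- rewrite (eq_map (add0n)) map_id add0n.
  apply: (@perm_trans _ (0%N :: (iota 0 (count id s).+1 ++ W s))).
    by rewrite perm_cons.
  by rewrite -cat1s (perm_catCA [:: 0%N]).
Qed.

Lemma size_W s : size (W s) = nzeros s.
Proof. by elim: s => [|[] s IH] //=; rewrite ?size_map IH. Qed.

Lemma W_le s w : w \in W s -> (w <= count id s)%N.
Proof.
elim: s w => [|[] s IH] w //=.
- by case/mapP => w' /IH h ->; rewrite add1n.
- by rewrite in_cons => /orP[/eqP -> // | /IH]; rewrite add0n.
Qed.

Lemma W_star L k R : W (nseq L true ++ nseq k false ++ nseq R true) = nseq k L.
Proof.
have h1 : W (nseq R true) = [::] by elim: R => //= R ->.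
have h2 x : W (nseq k false ++ x) = nseq k 0%N ++ W x by elim: k => //= k ->.
have h3 x : W (nseq L true ++ x) = map (addn L) (W x).
  elim: L => /= [|L ->]; first by rewrite (eq_map add0n) map_id.
  by rewrite -map_comp; apply: eq_map => y /=; rewrite addSn.
by rewrite h3 h2 h1 cats0 map_nseq addn0.
Qed.

Section Real.
Variables (R : realFieldType) (c : R).
Hypotheses (c0 : 0 <= c) (c1 : c <= 1).

Definition kk u v := c ^+ dist u v.
Definition Gseq (r : seq nat) := \sum_(u <- r) \sum_(v <- r) kk u v.
Definition hA n w := \sum_(u <- iota 0 n.+1) kk u w.

Lemma kkC u v : kk u v = kk v u.
Proof. by rewrite /kk /dist addnC. Qed.

Lemma sum_const_seq (r : seq nat) (a : R) : \sum_(x <- r) a = a *+ size r.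
Proof. by elim: r => [|x r IH]; rewrite ?big_nil ?big_cons ?IH ?mulrS. Qed.

Lemma sum_nseq k a (F : nat -> R) : \sum_(x <- nseq k a) F x = F a *+ k.
Proof. by elim: k => [|k IH]; rewrite ?big_nil //= big_cons IH mulrS. Qed.

Lemma Gseq_perm r r' : perm_eq r r' -> Gseq r = Gseq r'.
Proof.
by move=> h; rewrite /Gseq (perm_big _ h); apply: eq_bigr => u _; rewrite (perm_big _ h).
Qed.

Lemma Gseq_cat a w : Gseq (a ++ w) =
  Gseq a + (\sum_(x <- w) \sum_(u <- a) kk u x) *+ 2 + Gseq w.
Proof.
rewrite /Gseq big_cat /=.
under eq_bigr => u _ do rewrite big_cat.
under [X in _ + X]eq_bigr => u _ do rewrite big_cat.
rewrite !big_split /= mulr2n.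
have -> : \sum_(i <- a) \sum_(j <- w) kk i j = \sum_(x <- w) \sum_(u <- a) kk u x.
  by rewrite exchange_big.
have -> : \sum_(i <- w) \sum_(j <- a) kk i j = \sum_(x <- w) \sum_(u <- a) kk u x.
  by apply: eq_bigr => i _; apply: eq_bigr => j _; rewrite kkC.
by rewrite !addrA.
Qed.

Lemma G_bound s n L : count id s = n ->
  (forall w, (w <= n)%N -> hA n w <= hA n L) ->
  Gseq (V s) <= Gseq (iota 0 n.+1) + (hA n L *+ nzeros s) *+ 2
                + ((1 *+ nzeros s) *+ nzeros s).
Proof.
move=> hn hmax.
rewrite (@Gseq_perm _ _ (V_perm s)) hn Gseq_cat -size_W.
apply: lerD; first apply: lerD => //.
- rewrite lerMn2r; apply/orP; right.
  rewrite -sum_const_seq big_seq [X in _ <= X]big_seq.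
  apply: ler_sum => x hx; apply: hmax; rewrite -hn; exact: W_le.
- rewrite /Gseq -sum_const_seq; apply: ler_sum => u _.
  rewrite -sum_const_seq; apply: ler_sum => v _.
  exact: exprn_ile1.
Qed.

Lemma G_star n L k Rr : count id (nseq L true ++ nseq k false ++ nseq Rr true) = n ->
  Gseq (V (nseq L true ++ nseq k false ++ nseq Rr true)) =
  Gseq (iota 0 n.+1) + (hA n L *+ k) *+ 2 + ((1 *+ k) *+ k).
Proof.
move=> hn.
rewrite (@Gseq_perm _ _ (V_perm _)) hn Gseq_cat W_star.
rewrite /Gseq !sum_nseq /kk /dist subnn expr0.
by [].
Qed.

Definition Pc a := \sum_(d < a) c ^+ d.
Lemma PcS a : Pc a.+1 = Pc a + c ^+ a.
Proof. by rewrite /Pc big_ord_recr. Qed.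

Lemma hA_P n w : (w <= n)%N -> hA n w + 1 = Pc w.+1 + Pc (n - w).+1.
Proof.
move=> hw; rewrite /hA -[iota 0 n.+1]/(index_iota 0 n.+1).
rewrite (big_cat_nat (leq0n w.+1) (_ : w.+1 <= n.+1)%N) //=.
rewrite big_nat_rev /=.
have -> : \sum_(0 <= i < w.+1) kk (0 + w.+1 - i.+1) w = Pc w.+1.
  rewrite /Pc big_mkord; apply: eq_bigr => i _.
  have hi := ltn_ord i.
  by rewrite /kk /dist; congr (_ ^+ _); lia.
rewrite (_ : \sum_(w.+1 <= i < n.+1) kk i w = \sum_(0 + w.+1 <= i < n.+1) kk i w) // big_addn.
have -> : \sum_(0 <= i < n.+1 - w.+1) kk (i + w.+1) w = \sum_(i < n - w) c ^+ i.+1.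
  rewrite big_mkord (_ : (n.+1 - w.+1 = n - w)%N) //; apply: eq_bigr => i _.
  have hi := ltn_ord i.
  by rewrite /kk /dist; congr (_ ^+ _); lia.
rewrite [Pc (n - w).+1]/Pc big_ord_recl expr0.
by rewrite -addrA; congr (_ + _); rewrite addrC.
Qed.

Definition Q n w := Pc w.+1 + Pc (n - w).+1.

Lemma Q_step n w : (w < n)%N -> Q n w.+1 = Q n w + c ^+ w.+1 - c ^+ (n - w).
Proof.
move=> hw; rewrite /Q.
have e : (n - w.+1).+1 = (n - w)%N by lia.
rewrite e (PcS (n - w)) (PcS w.+1).
ring.
Qed.

Lemma Q_max n w : (w <= n)%N -> Q n w <= Q n (n %/ 2).
Proof.
move=> hw.
case: (leqP w (n %/ 2)) => h.
- have [d hd] : exists d, (w + d = n %/ 2)%N by exists (n %/ 2 - w)%N; lia.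
  elim: d w hw h hd => [|d IH] w hw h hd.
    by rewrite addn0 in hd; rewrite hd.
  apply: le_trans (IH w.+1 _ _ _); [|lia|lia|lia].
  rewrite Q_step; last by lia.
  have : c ^+ (n - w) <= c ^+ w.+1 by apply: ler_wiXn2l => //; lia.
  lra.
- have [d hd] : exists d, (n %/ 2 + d = w)%N by exists (w - n %/ 2)%N; lia.
  subst w; elim: d hw {h} => [|d IH] hw; first by rewrite addn0.
  apply: le_trans (IH _); last by lia.
  rewrite addnS Q_step; last by lia.
  have : c ^+ (n %/ 2 + d).+1 <= c ^+ (n - (n %/ 2 + d)) by apply: ler_wiXn2l => //; lia.
  lra.
Qed.


Lemma hA_max n w : (w <= n)%N -> hA n w <= hA n (n %/ 2).
Proof.
move=> hw.
have h1 := hA_P _ _ hw.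
have h2 := hA_P _ _ (_ : (n %/ 2 <= n)%N).
have := Q_max _ _ hw; rewrite /Q -h1 -h2 ?leq_div //.
by rewrite lerD2r.
Qed.

Lemma sym_split (f : nat -> nat -> R) (fsym : forall i j, f i j = f j i) n :
  \sum_(i < n.+1) \sum_(j < n.+1) f i j =
  \sum_(i < n.+1) f i i + (\sum_(t < n) \sum_(l < t.+1) f t.+1 l) *+ 2.
Proof.
elim: n => [|n IH].
  by rewrite !big_ord1 big_ord0 mul0rn addr0.
rewrite big_ord_recr /=.
under eq_bigr => i _ do rewrite big_ord_recr /=.
rewrite big_split /= IH.
rewrite [\sum_(i < n.+2) f i i]big_ord_recr [\sum_(t < n.+1) _]big_ord_recr /=.
rewrite [\sum_(j < n.+2) f n.+1 j]big_ord_recr /=.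
have -> : \sum_(i < n.+1) f i n.+1 = \sum_(i < n.+1) f n.+1 i.
  by apply: eq_bigr => i _; rewrite fsym.
rewrite [\sum_(t < n.+1) \sum_(l < t.+1) _]big_ord_recr /= mulrnDl !mulr2n; lra.
Qed.

Lemma Oc_mono s l k : (l <= k)%N -> (Oc s l <= Oc s k)%N.
Proof. by move=> h; rewrite (@Oc_split s _ _ h) leq_addr. Qed.

Lemma G_ord s : Gseq (V s) =
  \sum_(b < (size s).+1) \sum_(b' < (size s).+1) kk (Oc s b) (Oc s b').
Proof.
rewrite /Gseq /V big_map -[iota 0 _]/(index_iota 0 (size s).+1) big_mkord.
apply: eq_bigr => b _.
by rewrite big_map big_mkord.
Qed.

Definition Hs s T := \sum_(t < T) \sum_(l < t.+1) kk (Oc s t.+1) (Oc s l).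

Lemma G_Hs s : Gseq (V s) = ((size s).+1)%:R + Hs s (size s) *+ 2.
Proof.
rewrite G_ord (sym_split (fun i j => kk (Oc s i) (Oc s j))); last by move=> i j; apply: kkC.
congr (_ + _).
rewrite (eq_bigr (fun _ => 1)); first by rewrite sumr_const card_ord.
by move=> i _; rewrite /kk /dist subnn expr0.
Qed.

End Real.

Lemma prod_eq (R : realFieldType) (N : nat) s l k : (l <= k)%N ->
  \prod_(l <= j < k) (1 - (nth false s j)%:R / N%:R) =
  (1 - (N%:R : R)^-1) ^+ (Oc s k - Oc s l).
Proof.
move=> h; rewrite (@Oc_split s _ _ h) addKn -prodrXr.
apply: eq_bigr => j _; case: (nth false s j) => /=.
  by rewrite expr1 mul1r.
by rewrite expr0 mul0r subr0.
Qed.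

Lemma F_Hs (R : realFieldType) (N T : nat) s :
  F R N T s = (T%:R)^-1 * (T%:R + Hs R (1 - (N%:R : R)^-1) s T).
Proof.
rewrite /F big_split /= sumr_const card_ord; congr (_ * (_ + _)).
apply: eq_bigr => t _; apply: eq_bigr => l _.
rewrite prod_eq; last exact: ltnW.
rewrite /kk /dist.
have := Oc_mono s _ _ (ltnW (ltn_ord l)).
by move=> hle; congr (_ ^+ _); lia.
Qed.

Theorem lemma5 (R : realFieldType) (N T m : nat) :
  (2 <= N)%N -> (1 <= T)%N -> (1 <= m)%N -> (m <= T)%N ->
  exists s : seq bool,
    [/\ size s = T, nzeros s = m,
        (exists L Rr : nat, CBS_LR s L Rr /\ (L <= Rr.+1)%N /\ (Rr <= L.+1)%N)
      & forall s' : seq bool, size s' = T -> nzeros s' = m ->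
          F R N T s' <= F R N T s].
Proof.
move=> hN hT hm hmT.
set n := (T - m)%N.
set L := (n %/ 2)%N.
set Rr := (n - L)%N.
set c : R := 1 - (N%:R)^-1.
have Npos : 0 < (N%:R : R) by rewrite ltr0n; lia.
have c0 : 0 <= c.
  rewrite /c subr_ge0 invf_le1 // ler1n; lia.
have c1 : c <= 1.
  rewrite /c lerBlDr lerDl invr_ge0; exact: ltW.
set ss := nseq L true ++ nseq m false ++ nseq Rr true.
have hsize : size ss = T by rewrite /ss !size_cat !size_nseq /Rr /L /n; lia.
have hcount : count id ss = n.
  by rewrite /ss !count_cat !count_nseq /= /Rr /L; lia.
have hnz : nzeros ss = m.
  by rewrite /nzeros /ss !count_cat !count_nseq /=; lia.
exists ss; split => //.
  exists L, Rr; split; first by exists m; split.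
  by rewrite /Rr /L; lia.
move=> s' hs' hz'.
rewrite !F_Hs -/c.
apply: ler_wpM2l; first by rewrite invr_ge0 ler0n.
rewrite lerD2l.
have hc' : count id s' = n.
  have := count_predC id s'; rewrite hs'.
  have e : nzeros s' = count (predC id) s' by [].
  rewrite /n; lia.
have hb := @G_bound R c c0 c1 s' n L hc' (@hA_max R c c0 c1 n).
have hst := @G_star R c n L m Rr hcount.
rewrite hz' -hst /ss !G_Hs -/ss hs' hsize in hb.
move: hb; rewrite !mulr2n; lra.
Qed.
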